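(* Let $Y$ be a $\mathbb{Q}$-vector space, let $f:\mathbb{R}\to Y$, let $s\ge 1$ and $\delta>0$, and let $I=(-\delta,0)$. If $\Delta_h^sf(x)=0$ for all $x\in\mathbb{R}$ and all $h\in I$, then $\Delta_{h_1h_2\cdots h_s}f(x)=0$ for all $(x,h_1,\dots,h_s)\in\mathbb{R}^{s+1}$. The same conclusion holds if instead the hypothesis is assumed for all $h\in(0,\delta)$.
   Context: For $f:X\to Y$ between $\mathbb{Q}$-vector spaces and $h\in X$, $\Delta_hf(x)=f(x+h)-f(x)$; iterated differences are $\Delta_{h_1h_2\cdots h_s}f(x)=\Delta_{h_1}\left(\Delta_{h_2\cdots h_s}f\right)(x)$; and $\Delta_h^sf(x)=\sum_{k=0}^s\binom{s}{k}(-1)^{s-k}f(x+kh)$ (i.e. $\Delta_{h_1\cdots h_s}f(x)$ with $h_1=\cdots=h_s=h$). *)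

(* Defs.v *)
From Stdlib Require Import Reals.
From HB Require Import structures.
From mathcomp Require Import all_boot all_order all_algebra.

Set Implicit Arguments.
Unset Strict Implicit.
Unset Printing Implicit Defensive.

Import GRing.Theory.

Definition Delta (Y : lmodType rat) (h : R) (f : R -> Y) : R -> Y :=
  fun x => (f (Rplus x h) - f x)%R.

Definition Delta_seq (Y : lmodType rat) (hs : seq R) (f : R -> Y) : R -> Y :=
  foldr (@Delta Y) f hs.

Definition DeltaPow (Y : lmodType rat) (s : nat) (h : R) (f : R -> Y) (x : R) : Y :=
  (\sum_(k < s.+1) (((-1) ^+ (s - k)) *: f (Rplus x (Rmult (INR k) h))) *+ 'C(s, k))%R.

(* Main.v *)
Require Import Defs.
From Stdlib Require Import Reals Lra.
From HB Require Import structures.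
From mathcomp Require Import all_boot all_order all_algebra zify.
Import GRing.Theory.

Section S.
Variable Y : lmodType rat.
Local Open Scope ring_scope.

Lemma RaddR0 x : Rplus x R0 = x. Proof. exact: Rplus_0_r. Qed.

Lemma Dcons (c : R) l (g : R -> Y) x :
  Delta_seq (c :: l) g x = Delta_seq l g (Rplus x c) - Delta_seq l g x.
Proof. by []. Qed.

Lemma Dzero l1 l2 (g : R -> Y) x : Delta_seq (l1 ++ R0 :: l2) g x = 0.
Proof.
elim: l1 x => [|c l1 IH] x.
  by rewrite /= /Defs.Delta RaddR0 subrr.
by rewrite cat_cons (Dcons c) !IH subrr.
Qed.

Lemma Dzero_nth cs i (g : R -> Y) x : (i < size cs)%N -> nth R0 cs i = R0 ->
  Delta_seq cs g x = 0.
Proof.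
move=> Hi Hz; rewrite -(cat_take_drop i cs) (drop_nth R0 Hi) Hz; exact: Dzero.
Qed.

Lemma Dadd l1 l2 a b (g : R -> Y) x :
  Delta_seq (l1 ++ Rplus a b :: l2) g x =
  Delta_seq (l1 ++ a :: l2) g (Rplus x b) + Delta_seq (l1 ++ b :: l2) g x.
Proof.
elim: l1 x => [|c l1 IH] x.
  rewrite /= /Defs.Delta.
  rewrite (_ : Rplus x (Rplus a b) = Rplus (Rplus x b) a); last by ring.
  by rewrite addrA subrK.
rewrite !cat_cons !(Dcons c) !IH.
rewrite (_ : Rplus (Rplus x c) b = Rplus (Rplus x b) c); last by ring.
by rewrite opprD addrACA.
Qed.

Lemma Dneg l1 l2 a (g : R -> Y) :
  (forall x, Delta_seq (l1 ++ a :: l2) g x = 0) ->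
  (forall x, Delta_seq (l1 ++ Ropp a :: l2) g x = 0).
Proof.
move=> H x.
have := Dadd l1 l2 a (Ropp a) g x.
by rewrite (Rplus_opp_r a : Rplus a (Ropp a) = R0) Dzero H add0r => <-.
Qed.

Definition Fsum (g : R -> Y) (N : nat) (l : seq (R * R)) (x b : R) : Y :=
  \sum_(j < N.+1) (((-1) ^+ (N - j)) *:
     Delta_seq (map (fun pq => Rplus pq.1 (Rmult (INR j) pq.2)) l) g
        (Rplus x (Rmult (INR j) b))) *+ 'C(N, j).

Lemma Fsum_nil g N x b : Fsum g N [::] x b = DeltaPow N b g x.
Proof. by []. Qed.

Lemma Fsum_cons g N p q l x b :
  Fsum g N ((p, q) :: l) x b = Fsum g N l (Rplus x p) (Rplus b q) - Fsum g N l x b.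
Proof.
rewrite /Fsum -sumrB; apply: eq_bigr => j _ /=.
rewrite {1}/Defs.Delta.
rewrite (_ : Rplus (Rplus x (Rmult (INR j) b)) (Rplus p (Rmult (INR j) q)) =
             Rplus (Rplus x p) (Rmult (INR j) (Rplus b q))); last by ring.
by rewrite scalerBr mulrnBl.
Qed.


Lemma Fzero g N sg eta delta (Hsg : sg = R1 \/ sg = Ropp R1)
  (Hg : forall x b, Rlt R0 (Rmult sg b) -> Rlt (Rmult sg b) delta -> DeltaPow N b g x = 0) :
  forall l x b,
  (forall i, (i < size l)%N -> Rle R0 (Rmult sg (nth (R0,R0) l i).2) /\
                               Rle (Rmult sg (nth (R0,R0) l i).2) eta) ->
  Rlt R0 (Rmult sg b) -> Rlt (Rplus (Rmult sg b) (Rmult (INR (size l)) eta)) delta ->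
  Fsum g N l x b = 0.
Proof.
elim=> [|[p q] l IH] x b Hl Hb Hs.
  rewrite Fsum_nil; apply: Hg => //=; simpl in Hs; lra.
have [Hq1 Hq2] := Hl 0%N erefl; simpl in Hq1, Hq2.
have Hl' : forall i, (i < size l)%N -> Rle R0 (Rmult sg (nth (R0,R0) l i).2) /\
                               Rle (Rmult sg (nth (R0,R0) l i).2) eta.
  by move=> i Hi; exact: (Hl i.+1).
simpl size in Hs; rewrite S_INR Rmult_plus_distr_r in Hs.
rewrite Fsum_cons (IH _ _ Hl') ?(IH _ _ Hl') ?subrr //;
  try rewrite Rmult_plus_distr_l; try lra.
Qed.

Lemma small (f : R -> Y) s sg eta delta (Hsg : sg = R1 \/ sg = Ropp R1)
  (Hg : forall x b, Rlt R0 (Rmult sg b) -> Rlt (Rmult sg b) delta -> DeltaPow s b f x = 0)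
  (Heta : Rlt R0 eta) (Heta2 : Rlt (Rmult (INR s.+1) eta) delta) :
  forall hs, size hs = s ->
  (forall i, (i < s)%N -> Rle (Ropp eta) (Rmult sg (nth R0 hs i)) /\ Rle (Rmult sg (nth R0 hs i)) R0) ->
  forall x, Delta_seq hs f x = 0.
Proof.
move=> hs Hsz Hh x.
pose l := mkseq (fun i => (nth R0 hs i, Rdiv (Ropp (nth R0 hs i)) (INR i.+1))) s.
have Hl : size l = s by rewrite size_mkseq.
have H := Fzero f s sg eta delta Hsg Hg l x (Rmult sg eta).
have Hmap : map (fun pq => Rplus pq.1 (Rmult (INR 0) pq.2)) l = hs.
  apply: (@eq_from_nth _ R0); first by rewrite size_map Hl Hsz.
  move=> i; rewrite size_map Hl => Hi.
  rewrite (nth_map (R0,R0)) ?Hl // nth_mkseq //= Rmult_0_l.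
  exact: RaddR0.
rewrite /Fsum big_ord_recl big1 in H; last first.
  move=> j _; rewrite (@Dzero_nth _ j) ?scaler0 ?mul0rn //.
    by rewrite size_map Hl.
  rewrite (nth_map (R0,R0)) ?Hl // nth_mkseq // lift0.
  have : INR j.+1 <> R0 by apply: not_0_INR.
  move=> Hn; simpl fst; simpl snd; change (match nat_of_ord j with O => IZR (Zpos xH) | S _ => Rplus (INR (nat_of_ord j)) (IZR (Zpos xH)) end) with (INR j.+1); field; exact Hn.
have Hc1 : forall i, (i < size l)%N -> Rle R0 (Rmult sg (nth (R0,R0) l i).2) /\
                               Rle (Rmult sg (nth (R0,R0) l i).2) eta.
  move=> i; rewrite Hl => Hi.
  rewrite nth_mkseq //.
  have [Ha Hb] := Hh i Hi.
  have Hd : Rle R1 (INR i.+1) by rewrite S_INR; have := pos_INR i; lra.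
  have Hi1 : Rlt R0 (Rinv (INR i.+1)) by apply: Rinv_0_lt_compat; lra.
  have Hi2 : Rmult (INR i.+1) (Rinv (INR i.+1)) = R1 by apply: Rinv_r; lra.
  rewrite /Rdiv; simpl snd.
  change (match i with O => IZR (Zpos xH) | S _ => Rplus (INR i) (IZR (Zpos xH)) end) with (INR i.+1).
  case: Hsg Ha Hb => -> Ha Hb; split; nra.
have Hc2 : Rlt R0 (Rmult sg (Rmult sg eta)) by case: Hsg => ->; lra.
have Hc3 : Rlt (Rplus (Rmult sg (Rmult sg eta)) (Rmult (INR (size l)) eta)) delta.
  rewrite Hl; rewrite S_INR in Heta2; case: Hsg => ->; lra.
move: (H Hc1 Hc2 Hc3); rewrite /= Hmap Rmult_0_l RaddR0 subn0 bin0 mulr1n addr0.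
by move=> /eqP; rewrite scaler_eq0 signr_eq0 /= => /eqP.
Qed.

Lemma extend (f : R -> Y) l1 l2 sg eta (Hsg : sg = R1 \/ sg = Ropp R1) (Heta : Rlt R0 eta) :
  (forall h, Rle (Ropp eta) (Rmult sg h) /\ Rle (Rmult sg h) R0 ->
     forall x, Delta_seq (l1 ++ h :: l2) f x = 0) ->
  forall h x, Delta_seq (l1 ++ h :: l2) f x = 0.
Proof.
move=> H.
have Hsm : forall c, Rle (Ropp eta) c -> Rle c eta ->
    forall x, Delta_seq (l1 ++ c :: l2) f x = 0.
  move=> c Hc1 Hc2.
  case: (Rle_dec (Rmult sg c) R0) => Hs.
    apply: H; split=> //; case: Hsg Hs => -> Hs; lra.
  rewrite -(Ropp_involutive c); apply: Dneg; apply: H.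
  case: Hsg Hs => -> Hs; lra.
move=> h.
have [m Hm] := INR_unbounded (Rmult (Rabs h) (Rinv eta)).
have He1 : Rmult eta (Rinv eta) = R1 by apply: Rinv_r; lra.
have He2 : Rlt R0 (Rinv eta) by apply: Rinv_0_lt_compat.
have Hm2 : Rlt (Rabs h) (Rmult (INR m) eta).
  have := Rmult_lt_compat_r eta _ _ Heta Hm.
  have -> : Rmult (Rmult (Rabs h) (Rinv eta)) eta = Rabs h by field; lra.
  lra.
pose M := INR m.+1.
have HM : M = Rplus (INR m) R1 by rewrite /M S_INR.
have HM0 : Rlt R0 M by rewrite HM; have := pos_INR m; lra.
have HM1 : Rmult M (Rinv M) = R1 by apply: Rinv_r; lra.
have HM2 : Rlt R0 (Rinv M) by apply: Rinv_0_lt_compat.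
have [Hh1 Hh2] : Rlt h (Rmult M eta) /\ Rlt (Ropp (Rmult M eta)) h.
  apply: Rabs_def2; rewrite HM; lra.
pose c := Rmult h (Rinv M).
have Hc1 : Rle (Ropp eta) c.
  have := Rmult_lt_compat_r (Rinv M) _ _ HM2 Hh2.
  have -> : Rmult (Ropp (Rmult M eta)) (Rinv M) = Ropp eta by field; lra.
  rewrite /c; lra.
have Hc2 : Rle c eta.
  have := Rmult_lt_compat_r (Rinv M) _ _ HM2 Hh1.
  have -> : Rmult (Rmult M eta) (Rinv M) = eta by field; lra.
  rewrite /c; lra.
have Hk : forall k x, Delta_seq (l1 ++ Rmult (INR k) c :: l2) f x = 0.
  elim=> [|k IH] x.
    have -> : Rmult (INR 0) c = R0 by rewrite INR_0; exact: Rmult_0_l.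
    apply: Hsm; lra.
  have -> : Rmult (INR k.+1) c = Rplus (Rmult (INR k) c) c by rewrite S_INR; ring.
  by rewrite Dadd IH (Hsm c Hc1 Hc2) addr0.
have -> : h = Rmult (INR m.+1) c.
  rewrite /c -/M; field; lra.
exact: Hk.
Qed.

Lemma allpos (f : R -> Y) s sg eta delta (Hsg : sg = R1 \/ sg = Ropp R1)
  (Hg : forall x b, Rlt R0 (Rmult sg b) -> Rlt (Rmult sg b) delta -> DeltaPow s b f x = 0)
  (Heta : Rlt R0 eta) (Heta2 : Rlt (Rmult (INR s.+1) eta) delta) :
  forall k hs, size hs = s ->
  (forall i, (k <= i)%N -> (i < s)%N ->
     Rle (Ropp eta) (Rmult sg (nth R0 hs i)) /\ Rle (Rmult sg (nth R0 hs i)) R0) ->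
  forall x, Delta_seq hs f x = 0.
Proof.
elim=> [|k IH] hs Hsz Hh.
  apply: (small f s sg eta delta Hsg Hg Heta Heta2) => // i Hi; exact: Hh.
case: (ltnP k s) => Hks; last first.
  apply: IH => // i Hki His; exfalso; lia.
have Hk : (k < size hs)%N by rewrite Hsz.
rewrite -(cat_take_drop k hs) (drop_nth R0 Hk).
apply: (extend f _ _ sg eta Hsg Heta) => h Hh0.
apply: IH.
  rewrite size_cat /= size_take size_drop Hsz Hks; lia.
move=> i Hki His.
rewrite nth_cat size_take Hsz Hks ltnNge Hki /=.
case E: (i - k)%N => [|n] /=; first exact: Hh0.
rewrite nth_drop.
have -> : (k.+1 + n = i)%N by lia.
apply: Hh => //; lia.
Qed.
End S.

Theorem theorem3 (Y : lmodType rat) (f : R -> Y) (s : nat) (delta : R)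
  (hs1 : (1 <= s)%N) (hdelta : Rlt 0 delta) :
  ((forall x h : R, Rlt (Ropp delta) h -> Rlt h 0 -> DeltaPow s h f x = 0%R) ->
     forall (x : R) (hs : seq R), size hs = s -> Delta_seq hs f x = 0%R)
  /\
  ((forall x h : R, Rlt 0 h -> Rlt h delta -> DeltaPow s h f x = 0%R) ->
     forall (x : R) (hs : seq R), size hs = s -> Delta_seq hs f x = 0%R).
Proof.
pose eta := Rdiv delta (Rmult 2 (INR s.+1)).
have Hn : Rlt 0 (INR s.+1) by rewrite S_INR; have := pos_INR s; lra.
have Heta : Rlt R0 eta.
  rewrite /eta /Rdiv; apply: Rmult_lt_0_compat => //.
  apply: Rinv_0_lt_compat; lra.
have Heta2 : Rlt (Rmult (INR s.+1) eta) delta.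
  have -> : Rmult (INR s.+1) eta = Rdiv delta 2 by rewrite /eta; field; lra.
  lra.
split=> Hyp x hs Hsz.
- apply: (@allpos Y f s (Ropp R1) eta delta (or_intror erefl) _ Heta Heta2 s) => //.
    move=> y b H1 H2; apply: Hyp; lra.
  move=> i H1 H2; exfalso; lia.
- apply: (@allpos Y f s R1 eta delta (or_introl erefl) _ Heta Heta2 s) => //.
    move=> y b H1 H2; apply: Hyp; lra.
  move=> i H1 H2; exfalso; lia.
Qed.
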